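(* Let $p$ be a prime, $H_p=\mathbb{Z}[1/p]$, and for $\lambda\in(0,\infty)$ let $f_+(\lambda)=\sum_{m=0}^\infty\max(0,1-p^m\lambda)$, $f_-(\lambda)=\sum_{m=1}^\infty\max(0,p^{-m}\lambda-1)$. (i) The functions $f_\pm$ are convex, continuous, piecewise affine with slopes in $H_p$, and $f_+(p\lambda)-f_+(\lambda)=-\max(0,1-\lambda)$, $f_-(p\lambda)-f_-(\lambda)=\max(0,\lambda-1)$. (ii) The function $\theta=f_++f_-$ on $(0,\infty)$ is convex, continuous, piecewise affine with slopes in $H_p$, and satisfies $\theta(p\lambda)=\theta(\lambda)+\lambda-1$ for all $\lambda\in(0,\infty)$. (iii) For all $\lambda\in(0,\infty)$, $\left|\theta(\lambda)-\left(\frac{1}{p-1}\lambda-\frac{\log\lambda}{\log p}\right)\right|\leq1$. *)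

(* Defs.v *)
From Stdlib Require Import Reals Lra Lia ZArith Znumtheory List.
From Coquelicot Require Import Coquelicot.
Open Scope R_scope.

Definition in_Hp (p : nat) (s : R) : Prop :=
  exists (k : Z) (n : nat), s = IZR k / (INR p ^ n).

Definition fplus (p : nat) (lam : R) : R :=
  Series (fun m : nat => Rmax 0 (1 - INR p ^ m * lam)).

(* f_-(lam) = sum_{m>=1} max(0, p^{-m} lam - 1)  (index shifted: m = k+1) *)
Definition fminus (p : nat) (lam : R) : R :=
  Series (fun k : nat => Rmax 0 (/ (INR p ^ (S k)) * lam - 1)).

Definition theta (p : nat) (lam : R) : R := fplus p lam + fminus p lam.

Definition convex_pos (f : R -> R) : Prop :=
  forall x y t, 0 < x -> 0 < y -> 0 <= t <= 1 ->
    f (t * x + (1 - t) * y) <= t * f x + (1 - t) * f y.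

Definition continuous_pos (f : R -> R) : Prop :=
  forall x, 0 < x -> continuity_pt f x.

Definition pw_affine_Hp (p : nat) (f : R -> R) : Prop :=
  forall a b, 0 < a -> a < b ->
    exists (xs : list R) (sl c : nat -> R),
      (2 <= length xs)%nat /\
      nth 0 xs 0 = a /\ last xs 0 = b /\
      (forall i, (S i < length xs)%nat ->
         nth i xs 0 < nth (S i) xs 0 /\
         in_Hp p (sl i) /\
         forall x, nth i xs 0 <= x <= nth (S i) xs 0 -> f x = sl i * x + c i).

(* Main.v *)
Require Import Defs.
From Stdlib Require Import Reals Lra Lia ZArith Znumtheory List.
From Coquelicot Require Import Coquelicot.
Open Scope R_scope.

Fixpoint F (l : list (R*R)) (x : R) : R :=
  match l with nil => 0 | ab :: t => Rmax 0 (fst ab + snd ab * x) + F t x end.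

Lemma Rmax_abs u : Rmax 0 u = (u + Rabs u) * / 2.
Proof. unfold Rmax, Rabs; destruct (Rle_dec 0 u); destruct (Rcase_abs u); lra. Qed.

Lemma F_cont l x : continuity_pt (F l) x.
Proof.
  apply continuity_pt_filterlim. change (continuous (F l) x).
  induction l as [|[a b] t IH]; simpl.
  - apply continuous_ext with (fun _ => 0). { intros; reflexivity. } apply continuous_const.
  - apply (continuous_plus (fun y => Rmax 0 (a + b * y)) (F t)); [|exact IH].
    apply continuous_ext with (fun y => (a + b*y + Rabs (a + b*y)) * / 2).
    { intros; rewrite Rmax_abs; reflexivity. }
    assert (Hl : continuous (fun y => a + b * y) x).
    { apply (continuous_plus (fun _ => a) (fun y => b * y)). apply continuous_const.
      apply (continuous_mult (fun _ => b) (fun y => y)). apply continuous_const. apply continuous_id. }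
    apply (continuous_mult (fun y => a + b*y + Rabs (a + b*y)) (fun _ => /2)); [|apply continuous_const].
    apply (continuous_plus (fun y => a + b*y) (fun y => Rabs (a + b*y))). exact Hl.
    apply continuous_Rabs_comp. exact Hl.
Qed.

Lemma F_convex l x y t : 0 <= t <= 1 ->
  F l (t * x + (1 - t) * y) <= t * F l x + (1 - t) * F l y.
Proof.
  intros Ht. induction l as [|[a b] l IH]; simpl. lra.
  assert (H1 : Rmax 0 (a + b * (t * x + (1 - t) * y)) <=
     t * Rmax 0 (a + b * x) + (1 - t) * Rmax 0 (a + b * y)).
  { pose proof (Rmax_l 0 (a + b*x)). pose proof (Rmax_r 0 (a + b*x)).
    pose proof (Rmax_l 0 (a + b*y)). pose proof (Rmax_r 0 (a + b*y)).
    apply Rmax_lub; nra. }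
  lra.
Qed.

Fixpoint Fs (a : nat -> R) (N : nat) : R :=
  match N with O => 0 | S n => a n + Fs a n end.

Lemma Fs_stable a N n : (forall m, (N <= m)%nat -> a m = 0) -> (N <= n)%nat -> Fs a n = Fs a N.
Proof.
  intros H Hn. induction n. { replace N with 0%nat by lia. reflexivity. }
  destruct (Nat.eq_dec N (S n)). subst; reflexivity.
  simpl. rewrite H by lia. rewrite IHn by lia. lra.
Qed.

Lemma sum_n_Fs a n : sum_n a n = Fs a (S n).
Proof.
  induction n. simpl. rewrite sum_O. lra.
  rewrite sum_Sn, IHn. simpl. unfold plus; simpl. lra.
Qed.

Lemma series_fin a N : (forall m, (N <= m)%nat -> a m = 0) -> is_series a (Fs a N).
Proof.
  intros H. change (is_lim_seq (sum_n a) (Fs a N)).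
  apply is_lim_seq_ext_loc with (fun _ => Fs a N); [|apply is_lim_seq_const].
  exists N. intros n Hn. rewrite sum_n_Fs. symmetry. apply Fs_stable; auto.
Qed.

Lemma Series_fin a N : (forall m, (N <= m)%nat -> a m = 0) -> Series a = Fs a N.
Proof. intros H; apply is_series_unique, series_fin, H. Qed.

Lemma ex_series_fin a N : (forall m, (N <= m)%nat -> a m = 0) -> ex_series a.
Proof. intros H; eexists; apply series_fin; eauto. Qed.

Lemma powp_pos p n : (1 <= p)%nat -> 0 < INR p ^ n.
Proof. intros. apply pow_lt. apply lt_0_INR. lia. Qed.

Lemma Hp0 p : in_Hp p 0.
Proof. exists 0%Z, 0%nat. simpl. field. Qed.

Lemma Hp_add p s1 s2 : (1 <= p)%nat -> in_Hp p s1 -> in_Hp p s2 -> in_Hp p (s1 + s2).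
Proof.
  intros Hp [k1 [n1 ->]] [k2 [n2 ->]].
  exists (k1 * Z.of_nat (p ^ n2) + k2 * Z.of_nat (p ^ n1))%Z, (n1 + n2)%nat.
  rewrite plus_IZR, !mult_IZR, <- !INR_IZR_INZ, !pow_INR, pow_add.
  pose proof (powp_pos p n1 Hp). pose proof (powp_pos p n2 Hp).
  field. split; lra.
Qed.

Lemma Hp_negpow p m : in_Hp p (- INR p ^ m).
Proof.
  exists (- Z.of_nat (p ^ m))%Z, 0%nat. rewrite opp_IZR, <- INR_IZR_INZ, pow_INR. simpl. field.
Qed.

Lemma Hp_invpow p m : (1 <= p)%nat -> in_Hp p (/ INR p ^ m).
Proof.
  intros Hp. exists 1%Z, m. pose proof (powp_pos p m Hp). simpl. field. lra.
Qed.

Definition PA (p : nat) (f : R -> R) (a b : R) : Prop :=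
    exists (xs : list R) (sl c : nat -> R),
      (2 <= length xs)%nat /\
      nth 0 xs 0 = a /\ last xs 0 = b /\
      (forall i, (S i < length xs)%nat ->
         a <= nth i xs 0 /\ nth (S i) xs 0 <= b /\
         nth i xs 0 < nth (S i) xs 0 /\
         in_Hp p (sl i) /\
         forall x, nth i xs 0 <= x <= nth (S i) xs 0 -> f x = sl i * x + c i).

Lemma PA_ext p f g a b : (forall x, a <= x <= b -> f x = g x) -> PA p g a b -> PA p f a b.
Proof.
  intros E [xs [sl [c [H1 [H2 [H3 H4]]]]]]. exists xs, sl, c. split; [auto|split;[auto|split;[auto|]]].
  intros i Hi; destruct (H4 i Hi) as [A [B [C [D G]]]]. repeat split; auto.
  intros x Hx. rewrite E by lra. apply G, Hx.
Qed.

Lemma PA_aff p f a b s c0 : a < b -> in_Hp p s -> (forall x, a <= x <= b -> f x = s * x + c0) -> PA p f a b.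
Proof.
  intros Hab Hs E. exists (a :: b :: nil), (fun _ => s), (fun _ => c0).
  split; [simpl; lia|split;[auto|split;[auto|]]]. intros i Hi. simpl in Hi. destruct i; [|lia]. simpl.
  repeat split; try lra; auto.
Qed.

Lemma PA_add p f g a b s c0 : (1 <= p)%nat -> PA p f a b -> in_Hp p s ->
  (forall x, a <= x <= b -> g x = s * x + c0) -> PA p (fun x => g x + f x) a b.
Proof.
  intros Hp [xs [sl [c [H1 [H2 [H3 H4]]]]]] Hs E.
  exists xs, (fun i => s + sl i), (fun i => c0 + c i). split; [auto|split;[auto|split;[auto|]]].
  intros i Hi; destruct (H4 i Hi) as [A [B [C [D G]]]]. repeat split; auto.
  apply Hp_add; auto.
  intros x Hx. rewrite E by lra. rewrite G by lra. ring.
Qed.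

Lemma last_app_cons (l : list R) b t : last (l ++ b :: t) 0 = last (b :: t) 0.
Proof.
  induction l as [|x l IH]. reflexivity. simpl.
  destruct (l ++ b :: t) eqn:E. destruct l; discriminate. exact IH.
Qed.

Lemma PA_concat p f a b c : PA p f a b -> PA p f b c -> PA p f a c.
Proof.
  intros [xs1 [sl1 [c1 [H1 [H2 [H3 H4]]]]]] [xs2 [sl2 [c2 [K1 [K2 [K3 K4]]]]]].
  assert (Hab : a < b).
  { destruct (H4 0%nat ltac:(lia)) as [_ [B [C _]]]. lra. }
  assert (Hbc : b < c).
  { destruct (K4 0%nat ltac:(lia)) as [_ [B [C _]]]. lra. }
  assert (Hne : xs1 <> nil). { intro Ex; rewrite Ex in H1; simpl in H1. lia. }
  pose proof (app_removelast_last 0 Hne) as E1. rewrite H3 in E1.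
  set (l1 := removelast xs1) in *.
  destruct xs2 as [|b' t]; [simpl in K1; lia|]. simpl in K2. subst b'.
  assert (Hl1 : (1 <= length l1)%nat).
  { rewrite E1 in H1. rewrite length_app in H1. simpl in H1. lia. }
  assert (N1 : forall j, (j <= length l1)%nat -> nth j (l1 ++ b :: t) 0 = nth j xs1 0).
  { intros j Hj. rewrite E1. destruct (Nat.eq_dec j (length l1)).
    - subst. rewrite !app_nth2 by lia. rewrite Nat.sub_diag. reflexivity.
    - rewrite !app_nth1 by lia. reflexivity. }
  assert (N2 : forall j, (length l1 <= j)%nat -> nth j (l1 ++ b :: t) 0 = nth (j - length l1) (b :: t) 0).
  { intros j Hj. apply app_nth2; lia. }
  assert (Lx1 : length xs1 = S (length l1)).
  { rewrite E1, length_app. simpl. lia. }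
  exists (l1 ++ b :: t),
    (fun i => if Nat.ltb i (length l1) then sl1 i else sl2 (i - length l1)%nat),
    (fun i => if Nat.ltb i (length l1) then c1 i else c2 (i - length l1)%nat).
  split. { rewrite length_app. simpl. lia. }
  split. { rewrite N1 by lia. auto. }
  split. { rewrite last_app_cons. auto. }
  intros i Hi. rewrite length_app in Hi.
  destruct (Nat.ltb_spec i (length l1)).
  - rewrite !N1 by lia. destruct (H4 i) as [A [B [C [D G]]]]. lia.
    repeat split; auto; lra.
  - rewrite !N2 by lia. replace (S i - length l1)%nat with (S (i - length l1)) by lia.
    destruct (K4 (i - length l1)%nat) as [A [B [C [D G]]]]. simpl length in *; lia.
    repeat split; auto; lra.
Qed.

Lemma sign_case (al be a b : R) : a < b ->
  (forall x, a <= x <= b -> 0 <= al + be * x) \/ (forall x, a <= x <= b -> al + be * x <= 0) \/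
  exists k, a < k < b /\
   ((forall x, a <= x <= k -> 0 <= al + be * x) \/ (forall x, a <= x <= k -> al + be * x <= 0)) /\
   ((forall x, k <= x <= b -> 0 <= al + be * x) \/ (forall x, k <= x <= b -> al + be * x <= 0)).
Proof.
  intros Hab. destruct (Rtotal_order be 0) as [Hb|[Hb|Hb]].
  - set (k := - al / be).
    assert (E : forall x, al + be * x = be * (x - k)) by (intros; unfold k; field; lra).
    destruct (Rle_dec k a).
    + right; left. intros x Hx; rewrite E; nra.
    + destruct (Rle_dec b k).
      * left. intros x Hx; rewrite E; nra.
      * right; right. exists k. split. lra. split.
        left; intros x Hx; rewrite E; nra. right; intros x Hx; rewrite E; nra.
  - subst. destruct (Rle_dec 0 al).
    + left; intros; lra.
    + right; left; intros; lra.
  - set (k := - al / be).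
    assert (E : forall x, al + be * x = be * (x - k)) by (intros; unfold k; field; lra).
    destruct (Rle_dec k a).
    + left. intros x Hx; rewrite E; nra.
    + destruct (Rle_dec b k).
      * right; left. intros x Hx; rewrite E; nra.
      * right; right. exists k. split. lra. split.
        right; intros x Hx; rewrite E; nra. left; intros x Hx; rewrite E; nra.
Qed.

Lemma PA_step p al be t u v : (1 <= p)%nat -> in_Hp p be ->
  ((forall x, u <= x <= v -> 0 <= al + be * x) \/ (forall x, u <= x <= v -> al + be * x <= 0)) ->
  PA p (F t) u v -> PA p (F ((al, be) :: t)) u v.
Proof.
  intros Hp Hbe Hs HP.
  apply PA_ext with (g := fun x => Rmax 0 (al + be * x) + F t x); [intros; reflexivity|].
  destruct Hs as [Hs|Hs].
  - apply PA_add with (s := be) (c0 := al); auto. intros x Hx. rewrite Rmax_right by (apply Hs; auto). ring.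
  - apply PA_add with (s := 0) (c0 := 0); auto. apply Hp0. intros x Hx. rewrite Rmax_left by (apply Hs; auto). ring.
Qed.

Lemma PA_F p l : (1 <= p)%nat -> List.Forall (fun ab => in_Hp p (snd ab)) l ->
  forall a b, a < b -> PA p (F l) a b.
Proof.
  intros Hp Hl. induction Hl as [|[al be] t Hab Ht IH]; intros a b Hlt.
  - apply PA_aff with (s := 0) (c0 := 0); auto. apply Hp0. intros; simpl; ring.
  - simpl in Hab. destruct (sign_case al be a b Hlt) as [H|[H|[k [Hk [H1 H2]]]]].
    + apply PA_step; auto.
    + apply PA_step; auto.
    + apply PA_concat with k; apply PA_step; auto; apply IH; lra.
Qed.

Lemma F_app l1 l2 x : F (l1 ++ l2) x = F l1 x + F l2 x.
Proof. induction l1; simpl. ring. rewrite IHl1. ring. Qed.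

Lemma gen p f : (2 <= p)%nat ->
  (forall a b, 0 < a -> exists l, List.Forall (fun ab => in_Hp p (snd ab)) l /\
     forall x, a <= x <= b -> f x = F l x) ->
  convex_pos f /\ continuous_pos f /\ pw_affine_Hp p f.
Proof.
  intros Hp H. split; [|split].
  - intros x y t Hx Hy Ht.
    destruct (H (Rmin x y) (Rmax x y) (Rmin_pos x y Hx Hy)) as [l [_ E]].
    pose proof (Rmin_l x y). pose proof (Rmin_r x y). pose proof (Rmax_l x y). pose proof (Rmax_r x y).
    rewrite !E; try lra; try nra. apply F_convex; auto.
  - intros x Hx. destruct (H (x/2) (2*x)) as [l [_ E]]. lra.
    apply continuity_pt_locally_ext with (F l) (x/2). lra.
    intros y Hy. unfold Rdist in Hy. apply Rabs_def2 in Hy. symmetry; apply E; lra.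
    apply F_cont.
  - intros a b Ha Hab. destruct (H a b Ha) as [l [Hl E]].
    assert (HP : PA p f a b). { apply PA_ext with (g := F l); auto. apply PA_F; auto. lia. }
    destruct HP as [xs [sl [c [H1 [H2 [H3 H4]]]]]].
    exists xs, sl, c. split; [auto|split;[auto|split;[auto|]]].
    intros i Hi; destruct (H4 i Hi) as [A [B [C [D G]]]]. auto.
Qed.

Fixpoint lp (p N : nat) : list (R*R) :=
  match N with O => nil | S n => (1, - (INR p ^ n)) :: lp p n end.
Fixpoint lm (p N : nat) : list (R*R) :=
  match N with O => nil | S n => (-1, / (INR p ^ S n)) :: lm p n end.

Lemma lp_Hp p N : List.Forall (fun ab => in_Hp p (snd ab)) (lp p N).
Proof. induction N; constructor; auto. apply Hp_negpow. Qed.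
Lemma lm_Hp p N : (1 <= p)%nat -> List.Forall (fun ab => in_Hp p (snd ab)) (lm p N).
Proof. intros; induction N; constructor; auto. apply (Hp_invpow p (S N)); auto. Qed.

Lemma Fs_lp p N x : Fs (fun m => Rmax 0 (1 - INR p ^ m * x)) N = F (lp p N) x.
Proof. induction N; [reflexivity|]. cbn [Fs F lp lm fst snd]. rewrite IHN. f_equal. f_equal. ring. Qed.
Lemma Fs_lm p N x : Fs (fun k => Rmax 0 (/ (INR p ^ S k) * x - 1)) N = F (lm p N) x.
Proof. induction N; [reflexivity|]. cbn [Fs F lp lm fst snd]. rewrite IHN. f_equal. f_equal. ring. Qed.

Lemma P2 p : (2 <= p)%nat -> 2 <= INR p.
Proof. intros. replace 2 with (INR 2) by (simpl; ring). apply le_INR; lia. Qed.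

Lemma vanp p N a x : (2 <= p)%nat -> 1 <= INR p ^ N * a -> 0 < a -> a <= x ->
  forall m, (N <= m)%nat -> Rmax 0 (1 - INR p ^ m * x) = 0.
Proof.
  intros Hp H Ha Hx m Hm. pose proof (P2 p Hp).
  assert (INR p ^ N <= INR p ^ m) by (apply Rle_pow; lra || lia).
  assert (0 <= INR p ^ N) by (apply pow_le; lra).
  apply Rmax_left. nra.
Qed.

Lemma vanm p N x : (2 <= p)%nat -> 0 < x -> x <= INR p ^ S N ->
  forall m, (N <= m)%nat -> Rmax 0 (/ (INR p ^ S m) * x - 1) = 0.
Proof.
  intros Hp Hx H m Hm. pose proof (P2 p Hp).
  assert (INR p ^ S N <= INR p ^ S m) by (apply Rle_pow; lra || lia).
  assert (0 < INR p ^ S m) by (apply pow_lt; lra).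
  apply Rmax_left.
  assert (/ INR p ^ S m * x <= / INR p ^ S m * INR p ^ S m).
  { apply Rmult_le_compat_l. left; apply Rinv_0_lt_compat; lra. lra. }
  rewrite Rinv_l in H3 by lra. lra.
Qed.

Lemma n_le_pow p n : (2 <= p)%nat -> INR n <= INR p ^ n.
Proof.
  intros Hp. pose proof (P2 p Hp). induction n. simpl; lra.
  rewrite S_INR. simpl. pose proof (pow_R1_Rle (INR p) n ltac:(lra)). nra.
Qed.

Lemma exN p M : (2 <= p)%nat -> exists N, M <= INR p ^ N.
Proof.
  intros Hp. destruct (INR_unbounded M) as [n Hn]. exists n. pose proof (n_le_pow p n Hp). lra.
Qed.

Lemma rep p a b : (2 <= p)%nat -> 0 < a -> exists N, forall x, a <= x <= b ->
  fplus p x = F (lp p N) x /\ fminus p x = F (lm p N) x.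
Proof.
  intros Hp Ha. destruct (exN p (Rmax (/a) b) Hp) as [N HN].
  pose proof (P2 p Hp).
  assert (HN1 : 1 <= INR p ^ N * a).
  { pose proof (Rmax_l (/a) b). assert (/a * a = 1) by (field; lra).
    assert (/ a <= INR p ^ N) by lra. nra. }
  assert (HN2 : b <= INR p ^ S N).
  { pose proof (Rmax_r (/a) b). simpl. pose proof (pow_R1_Rle (INR p) N ltac:(lra)). nra. }
  exists N. intros x Hx. split.
  - unfold fplus. rewrite (Series_fin _ N). apply Fs_lp. apply vanp with a; auto; lra.
  - unfold fminus. rewrite (Series_fin _ N). apply Fs_lm. apply vanm; auto; lra.
Qed.

Lemma fplus_eq p lam : (2 <= p)%nat -> 0 < lam ->
  fplus p (INR p * lam) - fplus p lam = - Rmax 0 (1 - lam).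
Proof.
  intros Hp Hl. destruct (exN p (/ lam) Hp) as [N HN].
  assert (HN1 : 1 <= INR p ^ N * lam).
  { assert (/lam * lam = 1) by (field; lra). nra. }
  unfold fplus.
  rewrite (Series_incr_1 (fun m => Rmax 0 (1 - INR p ^ m * lam))).
  2: { apply ex_series_fin with N. apply vanp with lam; auto; lra. }
  rewrite (Series_ext (fun m => Rmax 0 (1 - INR p ^ m * (INR p * lam)))
     (fun k => Rmax 0 (1 - INR p ^ S k * lam))).
  2: { intros; simpl; f_equal; ring. }
  simpl. rewrite Rmult_1_l. ring.
Qed.

Lemma fminus_eq p lam : (2 <= p)%nat -> 0 < lam ->
  fminus p (INR p * lam) - fminus p lam = Rmax 0 (lam - 1).
Proof.
  intros Hp Hl. pose proof (P2 p Hp). destruct (exN p (INR p * lam) Hp) as [N HN].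
  unfold fminus.
  rewrite (Series_incr_1 (fun k => Rmax 0 (/ INR p ^ S k * (INR p * lam) - 1))).
  2: { apply ex_series_fin with N. apply vanm; auto. nra.
       simpl. pose proof (pow_R1_Rle (INR p) N ltac:(lra)). nra. }
  rewrite (Series_ext (fun k => Rmax 0 (/ INR p ^ S (S k) * (INR p * lam) - 1))
     (fun k => Rmax 0 (/ INR p ^ S k * lam - 1))).
  2: { intros k; pose proof (pow_lt (INR p) k ltac:(lra)). f_equal; simpl; field; lra. }
  replace (/ INR p ^ 1 * (INR p * lam)) with lam by (simpl; field; lra). ring.
Qed.

Lemma theta_eq p lam : (2 <= p)%nat -> 0 < lam -> theta p (INR p * lam) = theta p lam + lam - 1.
Proof.
  intros Hp Hl. unfold theta. pose proof (fplus_eq p lam Hp Hl). pose proof (fminus_eq p lam Hp Hl).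
  unfold Rmax in *. destruct (Rle_dec 0 (1 - lam)); destruct (Rle_dec 0 (lam - 1)); lra.
Qed.

Lemma theta_base p lam : (2 <= p)%nat -> 1 <= lam <= INR p -> theta p lam = 0.
Proof.
  intros Hp Hl. pose proof (P2 p Hp). unfold theta, fplus, fminus.
  rewrite (Series_fin _ 0). rewrite (Series_fin _ 0). simpl; ring.
  - apply vanm; auto; simpl; lra.
  - apply vanp with 1; simpl; auto; lra.
Qed.

Lemma ln_le_m1 x : 0 < x -> ln x <= x - 1.
Proof. intros. pose proof (exp_ineq1_le (ln x)). rewrite exp_ln in H0; lra. Qed.

Definition gg p lam := theta p lam - (/ (INR p - 1) * lam - ln lam / ln (INR p)).

Lemma base_bound p lam : (2 <= p)%nat -> 1 <= lam <= INR p -> Rabs (gg p lam) <= 1.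
Proof.
  intros Hp Hl. pose proof (P2 p Hp). unfold gg. rewrite theta_base by auto.
  set (P := INR p) in *.
  assert (Lp : 0 < ln P) by (rewrite <- ln_1; apply ln_increasing; lra).
  assert (L0 : 0 <= ln lam) by (rewrite <- ln_1; apply ln_le; lra).
  assert (L1 : ln lam <= ln P) by (apply ln_le; lra).
  set (w := / lam).
  assert (Hw : lam * w = 1) by (unfold w; field; lra).
  assert (Hw0 : 0 < w) by (unfold w; apply Rinv_0_lt_compat; lra).
  assert (A1 : - ln lam <= w - 1).
  { pose proof (ln_le_m1 w Hw0) as HH. unfold w in HH. rewrite ln_Rinv in HH by lra. exact HH. }
  assert (A2 : ln P - ln lam <= P * w - 1).
  { assert (HP0 : 0 < P * w) by (apply Rmult_lt_0_compat; lra).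
    pose proof (ln_le_m1 _ HP0) as HH. rewrite ln_mult in HH by lra. unfold w in HH.
    rewrite ln_Rinv in HH by lra. exact HH. }
  assert (K1 : 0 <= (P - lam) * (ln lam - (1 - w))) by (apply Rmult_le_pos; lra).
  assert (K2 : 0 <= (lam - 1) * (P * w - 1 - (ln P - ln lam))) by (apply Rmult_le_pos; lra).
  assert (K3 : P * (lam * w) = P) by (rewrite Hw; ring).
  assert (Key : (lam - 1) * ln P <= (P - 1) * ln lam) by nra.
  set (u := ln lam / ln P). set (v := / (P - 1) * lam).
  assert (Hu : u * ln P = ln lam) by (unfold u; field; lra).
  assert (Hv : v * (P - 1) = lam) by (unfold v; field; lra).
  assert (u0 : 0 <= u) by (unfold u; apply Rmult_le_pos; [lra| left; apply Rinv_0_lt_compat; lra]).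
  assert (u1 : u <= 1).
  { apply Rmult_le_reg_r with (ln P); auto. lra. }
  assert (v0 : 0 <= v) by (unfold v; apply Rmult_le_pos; [left; apply Rinv_0_lt_compat; lra|lra]).
  assert (Key2 : (v * (P - 1) - 1) * ln P <= (P - 1) * u * ln P) by (rewrite Hv; nra).
  assert (Key3 : v * (P - 1) - 1 <= (P - 1) * u).
  { apply Rmult_le_reg_r with (ln P); auto. }
  apply Rabs_le. split; nra.
Qed.

Lemma gg_scale p lam : (2 <= p)%nat -> 0 < lam -> gg p (INR p * lam) = gg p lam.
Proof.
  intros Hp Hl. pose proof (P2 p Hp). unfold gg. rewrite theta_eq by auto.
  rewrite ln_mult by lra.
  assert (0 < ln (INR p)) by (rewrite <- ln_1; apply ln_increasing; lra).
  field; lra.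
Qed.

Lemma bound_n p n : (2 <= p)%nat -> forall lam, / INR p ^ n <= lam <= INR p ^ n -> Rabs (gg p lam) <= 1.
Proof.
  intros Hp. pose proof (P2 p Hp). induction n; intros lam Hl.
  - simpl in Hl. apply base_bound; auto. replace (/1) with 1 in Hl by field. lra.
  - assert (Hpn : 1 <= INR p ^ n) by (apply pow_R1_Rle; lra).
    assert (Hi : 0 < / INR p ^ n <= 1).
    { split. apply Rinv_0_lt_compat; lra. rewrite <- Rinv_1. apply Rinv_le_contravar; lra. }
    assert (Hlp : 0 < lam).
    { assert (0 < / INR p ^ S n) by (apply Rinv_0_lt_compat, pow_lt; lra). lra. }
    destruct (Rle_dec 1 lam).
    + destruct (Rle_dec lam (INR p)). apply base_bound; auto.
      replace lam with (INR p * (lam / INR p)) by (field; lra).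
      rewrite gg_scale by (auto; apply Rdiv_lt_0_compat; lra).
      apply IHn. split.
      * assert (1 <= lam / INR p). { apply Rmult_le_reg_r with (INR p). lra. field_simplify; lra. }
        lra.
      * apply Rmult_le_reg_r with (INR p). lra. field_simplify. 2: lra.
        destruct Hl as [_ Hl]. simpl in Hl. lra.
    + rewrite <- gg_scale by auto.
      destruct (Rle_dec 1 (INR p * lam)).
      * apply base_bound; auto. nra.
      * apply IHn. split; [|lra].
        destruct Hl as [Hl _]. simpl in Hl.
        assert (E : / (INR p * INR p ^ n) = / INR p * / INR p ^ n) by (field; lra).
        rewrite E in Hl.
        assert (INR p * (/ INR p * / INR p ^ n) <= INR p * lam) by (apply Rmult_le_compat_l; lra).
        replace (INR p * (/ INR p * / INR p ^ n)) with (/ INR p ^ n) in H0 by (field; lra). lra.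
Qed.

Lemma bound p lam : (2 <= p)%nat -> 0 < lam -> Rabs (gg p lam) <= 1.
Proof.
  intros Hp Hl. pose proof (P2 p Hp).
  destruct (exN p (Rmax lam (/ lam)) Hp) as [n Hn].
  apply (bound_n p n Hp). pose proof (Rmax_l lam (/lam)). pose proof (Rmax_r lam (/lam)).
  assert (0 < INR p ^ n) by (apply pow_lt; lra).
  split; [|lra].
  replace lam with (/ / lam) by (field; lra).
  apply Rinv_le_contravar. apply Rinv_0_lt_compat; lra. lra.
Qed.

Theorem lemma5p10 (p : nat) (hp : prime (Z.of_nat p)) :
  (* (i) *)
  (convex_pos (fplus p) /\ continuous_pos (fplus p) /\ pw_affine_Hp p (fplus p) /\
   convex_pos (fminus p) /\ continuous_pos (fminus p) /\ pw_affine_Hp p (fminus p) /\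
   (forall lam, 0 < lam ->
      fplus p (INR p * lam) - fplus p lam = - Rmax 0 (1 - lam)) /\
   (forall lam, 0 < lam ->
      fminus p (INR p * lam) - fminus p lam = Rmax 0 (lam - 1))) /\
  (* (ii) *)
  (convex_pos (theta p) /\ continuous_pos (theta p) /\ pw_affine_Hp p (theta p) /\
   (forall lam, 0 < lam -> theta p (INR p * lam) = theta p lam + lam - 1)) /\
  (* (iii) *)
  (forall lam, 0 < lam ->
     Rabs (theta p lam - (/ (INR p - 1) * lam - ln lam / ln (INR p))) <= 1).
Proof.
  assert (Hp : (2 <= p)%nat) by (pose proof (prime_ge_2 _ hp); lia).
  assert (G1 : convex_pos (fplus p) /\ continuous_pos (fplus p) /\ pw_affine_Hp p (fplus p)).
  { apply gen; auto. intros a b Ha. destruct (rep p a b Hp Ha) as [N HN].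
    exists (lp p N). split. apply lp_Hp. intros x Hx; apply HN; auto. }
  assert (G2 : convex_pos (fminus p) /\ continuous_pos (fminus p) /\ pw_affine_Hp p (fminus p)).
  { apply gen; auto. intros a b Ha. destruct (rep p a b Hp Ha) as [N HN].
    exists (lm p N). split. apply lm_Hp; lia. intros x Hx; apply HN; auto. }
  assert (G3 : convex_pos (theta p) /\ continuous_pos (theta p) /\ pw_affine_Hp p (theta p)).
  { apply gen; auto. intros a b Ha. destruct (rep p a b Hp Ha) as [N HN].
    exists (lp p N ++ lm p N). split. apply Forall_app; split; [apply lp_Hp|apply lm_Hp; lia].
    intros x Hx. rewrite F_app. unfold theta. destruct (HN x Hx) as [-> ->]. reflexivity. }
  destruct G1 as [A1 [B1 C1]]. destruct G2 as [A2 [B2 C2]]. destruct G3 as [A3 [B3 C3]].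
  split; [|split].
  - repeat split; auto.
    + intros; apply fplus_eq; auto.
    + intros; apply fminus_eq; auto.
  - repeat split; auto. intros; apply theta_eq; auto.
  - intros lam Hl. exact (bound p lam Hp Hl).
Qed.
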